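(* Let $\sigma:[0,\infty)\to[0,\infty)$ be nondecreasing with $\lim_{t\to\infty}\sigma(t)=\infty$, admitting $\varrho$ as a proximate order with $\lim_{t\to\infty}\varrho(t)=\rho$. Then $\beta(\sigma)=\mu(\sigma)=\rho(\sigma)=\alpha(\sigma)=\rho$. Consequently, if $\sigma$ admits a nonzero proximate order, then $\sigma$ satisfies $(\omega_1)$ and $(\omega_6)$.
   Context: A proximate order is a function $\varrho:(c,\infty)\to[0,\infty)$, $c\ge0$, which is continuous and piecewise continuously differentiable, with $\lim_{t\to\infty}\varrho(t)=\rho<\infty$ and $\lim_{t\to\infty}t\varrho'(t)\log t=0$; it is nonzero if $\rho>0$. $\sigma$ admits $\varrho$ as a proximate order if there are $A,B>0$ with $A\le\sigma(t)/t^{\varrho(t)}\le B$ for all $t$ large enough. For a positive measurable $f$ on $[A,\infty)$: $\alpha(f):=\inf\{\alpha:\exists C_\alpha>0\ \forall\Lambda>1,\ \limsup_{x\to\infty}\sup_{\lambda\in[1,\Lambda]}\frac{f(\lambda x)}{\lambda^{\alpha}f(x)}\le C_\alpha\}$, $\beta(f):=\sup\{\beta:\exists D_\beta>0\ \forall\Lambda>1,\ \liminf_{x\to\infty}\inf_{\lambda\in[1,\Lambda]}\frac{f(\lambda x)}{\lambda^{\beta}f(x)}\ge D_\beta\}$, $\mu(f):=\liminf_{x\to\infty}\frac{\log f(x)}{\log x}$, $\rho(f):=\limsup_{x\to\infty}\frac{\log f(x)}{\log x}$; for $\sigma$ these are computed on any $[A,\infty)$, $A>0$, where $\sigma>0$.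 Condition $(\omega_1)$: $\sigma(2t)=O(\sigma(t))$ as $t\to\infty$. Condition $(\omega_6)$: there is $H\ge1$ with $2\sigma(t)\le\sigma(Ht)+H$ for all $t\ge0$. *)

(* Defs.v *)
From HB Require Import structures.
From mathcomp Require Import all_boot all_order all_algebra.
From mathcomp Require Import all_classical all_reals all_analysis.
Set Implicit Arguments. Unset Strict Implicit. Unset Printing Implicit Defensive.
Import Order.TTheory GRing.Theory Num.Theory.
Import numFieldNormedType.Exports.
Local Open Scope classical_set_scope.
Local Open Scope ring_scope.

Section Defs.
Context {R : realType}.

Definition limsup_pinfty (g : R -> \bar R) : \bar R := limf_esup g (pinfty_nbhs R).
Definition liminf_pinfty (g : R -> \bar R) : \bar R := limf_einf g (pinfty_nbhs R).

Definition sup_ratio (f : R -> R) (a L x : R) : \bar R :=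
  ereal_sup [set ((f (l * x)) / (l `^ a * f x))%:E | l in `[1, L]].
Definition inf_ratio (f : R -> R) (b L x : R) : \bar R :=
  ereal_inf [set ((f (l * x)) / (l `^ b * f x))%:E | l in `[1, L]].

Definition index_alpha (f : R -> R) : \bar R :=
  ereal_inf [set a%:E | a in [set a : R | exists2 C : R, 0 < C &
     forall L : R, 1 < L -> (limsup_pinfty (sup_ratio f a L) <= C%:E)%E]].

Definition index_beta (f : R -> R) : \bar R :=
  ereal_sup [set b%:E | b in [set b : R | exists2 D : R, 0 < D &
     forall L : R, 1 < L -> (D%:E <= liminf_pinfty (inf_ratio f b L))%E]].

Definition index_mu (f : R -> R) : \bar R :=
  liminf_pinfty (fun x => (ln (f x) / ln x)%:E).
Definition index_rho (f : R -> R) : \bar R :=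
  limsup_pinfty (fun x => (ln (f x) / ln x)%:E).

Definition piecewise_C1 (c : R) (rho : R -> R) : Prop :=
  exists D : set R, D `<=` `]c, +oo[ /\
    (forall T : R, finite_set (D `&` `]-oo, T])) /\
    (forall t, c < t -> ~ D t -> derivable rho t 1 /\ {for t, continuous (derive1 rho)}) /\
    (forall d, D d ->
       (exists l : R, (derive1 rho) x @[x --> d^'-] --> l) /\
       (exists l : R, (derive1 rho) x @[x --> d^'+] --> l)).

Definition proximate_order (c : R) (rho : R -> R) (r : R) : Prop :=
  [/\ 0 <= c,
      (forall t, c < t -> 0 <= rho t),
      {in `]c, +oo[, continuous rho} /\ piecewise_C1 c rho,
      rho t @[t --> +oo] --> r &
      (forall e : R, 0 < e -> \forall t \near +oo,
           derivable rho t 1 -> `|t * (derive1 rho) t * ln t| < e)].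

Definition admits_proximate_order (sigma rho : R -> R) : Prop :=
  exists A B : R, [/\ 0 < A, 0 < B &
    \forall t \near +oo, A <= sigma t / t `^ rho t <= B].

Definition omega1 (sigma : R -> R) : Prop :=
  exists C : R, \forall t \near +oo, `|sigma (2 * t)| <= C * `|sigma t|.

Definition omega6 (sigma : R -> R) : Prop :=
  exists2 H : R, 1 <= H & forall t, 0 <= t -> 2 * sigma t <= sigma (H * t) + H.

End Defs.

(* Main.v *)
Require Import Defs.
From HB Require Import structures.
From mathcomp Require Import all_boot all_order all_algebra.
From mathcomp Require Import all_classical all_reals all_analysis.
From mathcomp Require Import finmap.
From mathcomp Require Import ring lra.
Import Order.TTheory GRing.Theory Num.Theory.
Import numFieldNormedType.Exports.
Local Open Scope classical_set_scope.
Local Open Scope ring_scope.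


Section S.
Context {R : realType}.
Implicit Types (f : R -> R).
Lemma nearP (P : R -> Prop) : (\forall t \near +oo, P t) <-> exists M : R, forall t, M < t -> P t.
Proof.
split.
  by move=> [M [_ HM]]; exists M => t Mt; apply: HM.
move=> [M HM]; exists M; split; first exact: num_real.
by move=> t Mt; apply: HM.
Qed.

Lemma nbhs_gt (M : R) : pinfty_nbhs R [set x | M < x].
Proof. by apply/nearP; exists M. Qed.

Lemma near_meet (V : set R) (M : R) : pinfty_nbhs R V -> exists x, V x /\ M < x.
Proof.
move=> /nearP [M' HM]; exists (Num.max M M' + 1); split.
  apply: HM; rewrite ltr_pwDr // le_max lexx orbT //.
by rewrite ltr_pwDr // le_max lexx.
Qed.

Section ES.
Local Open Scope ereal_scope.

Lemma limsup_le (g : R -> \bar R) (C : \bar R) (M : R) :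
  (forall x, (M < x)%R -> g x <= C) -> limsup_pinfty g <= C.
Proof.
move=> H; rewrite /limsup_pinfty limf_esupE; apply: ge_ereal_inf.
exists (ereal_sup (g @` [set x | (M < x)%R])); first by exists [set x | (M < x)%R] => //; exact: nbhs_gt.
by apply: ge_ereal_sup => _ [x Mx <-]; apply: H.
Qed.

Lemma limsup_ge (g : R -> \bar R) (C : \bar R) (M : R) :
  (forall x, (M < x)%R -> C <= g x) -> C <= limsup_pinfty g.
Proof.
move=> H; rewrite /limsup_pinfty limf_esupE; apply: le_ereal_inf_tmp.
move=> _ [V FV <-]; have [x [Vx Mx]] := @near_meet _ M FV.
by apply: le_ereal_sup_tmp; exists (g x); [exists x|apply: H].
Qed.

Lemma liminf_ge (g : R -> \bar R) (C : \bar R) (M : R) :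
  (forall x, (M < x)%R -> C <= g x) -> C <= liminf_pinfty g.
Proof.
move=> H; rewrite /liminf_pinfty limf_einfE; apply: le_ereal_sup_tmp.
exists (ereal_inf (g @` [set x | (M < x)%R])); first by exists [set x | (M < x)%R] => //; exact: nbhs_gt.
by apply: le_ereal_inf_tmp => _ [x Mx <-]; apply: H.
Qed.

Lemma liminf_le (g : R -> \bar R) (C : \bar R) (M : R) :
  (forall x, (M < x)%R -> g x <= C) -> liminf_pinfty g <= C.
Proof.
move=> H; rewrite /liminf_pinfty limf_einfE; apply: ge_ereal_sup.
move=> _ [V FV <-]; have [x [Vx Mx]] := @near_meet _ M FV.
by apply: ge_ereal_inf; exists (g x); [exists x|apply: H].
Qed.

Lemma ereal_eps (y : \bar R) (r : R) :
  (forall e, (0 < e)%R -> (r - e)%:E <= y <= (r + e)%:E) -> y = r%:E.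
Proof.
move=> H; have [/andP[h1 h2]] := H 1%R ltr01.
case: y H h1 h2 => [s| |] H; rewrite ?leey ?leNye ?andbF //= => _ _.
congr (_%:E); apply/eqP; rewrite eq_le; apply/andP; split.
  apply/ler_addgt0Pr => e e0; have /andP[_] := H e e0; by rewrite lee_fin.
apply/ler_addgt0Pr => e e0; have /andP[+ _] := H e e0; rewrite lee_fin.
by rewrite lerBlDr.
Qed.
End ES.

Lemma mono_nopt f (a b : R) : a <= b ->
  (forall x, a <= x <= b -> {for x, continuous f}) ->
  (forall x, a < x < b -> derivable f x 1 /\ 0 <= derive1 f x) -> f a <= f b.
Proof.
move=> ab fc fd.
have := @ger0_derive1_le_cc R f a b.
apply.
- by move=> x; rewrite in_itv /= => /fd [].
- by move=> x; rewrite in_itv /= => /fd [].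
- apply: continuous_in_subspaceT => x /set_mem /=; rewrite in_itv /=; exact: fc.
- by rewrite in_itv /= lexx ab.
- by rewrite in_itv /= lexx ab.
- exact: ab.
Qed.

Lemma mono_aux f (D : set R) (a b : R) :
  (forall x, a <= x <= b -> {for x, continuous f}) ->
  (forall x, a < x < b -> ~ D x -> derivable f x 1 /\ 0 <= derive1 f x) ->
  forall n a' b' (s : seq R), a <= a' -> a' <= b' -> b' <= b -> uniq s ->
  (size s <= n)%N -> (forall d, D d -> a' < d < b' -> d \in s) -> f a' <= f b'.
Proof.
move=> fc fd; elim=> [|n IH] a' b' s aa' ab' bb' us sn Ds.
  have s0 : s = [::] by case: s sn us Ds.
  apply: mono_nopt => //.
    move=> x /andP[h1 h2]; apply: fc; rewrite (le_trans aa' h1) (le_trans h2 bb') //.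
  move=> x /andP[h1 h2]; apply: fd.
    by rewrite (le_lt_trans aa' h1) (lt_le_trans h2 bb').
  by move=> /Ds; rewrite s0 in_nil h1 h2 => /(_ isT).
case: (boolP (has (fun d => (a' < d) && (d < b')) s)).
  move=> /hasP [d ds /andP [ad db]].
  have srem : (size (rem d s) <= n)%N by rewrite size_rem //; case: (size s) sn => //.
  have urem : uniq (rem d s) by apply: rem_uniq.
  apply: (@le_trans _ _ (f d)).
    apply: (IH a' d (rem d s)) => //; first exact: ltW.
      exact: (le_trans (ltW db) bb').
    move=> e De /andP[h1 h2]; rewrite (mem_rem_uniq _ us) inE /= (lt_eqF h2) /=.
    by apply: Ds => //; rewrite h1 (lt_trans h2 db).
  apply: (IH d b' (rem d s)) => //; first exact: (le_trans aa' (ltW ad)).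
    exact: ltW.
  move=> e De /andP[h1 h2]; rewrite (mem_rem_uniq _ us) inE /= (gt_eqF h1) /=.
  by apply: Ds => //; rewrite h2 (lt_trans ad h1).
move=> /hasPn Hn.
apply: mono_nopt => //.
  move=> x /andP[h1 h2]; apply: fc; rewrite (le_trans aa' h1) (le_trans h2 bb') //.
move=> x /andP[h1 h2]; apply: fd.
  by rewrite (le_lt_trans aa' h1) (lt_le_trans h2 bb').
move=> /Ds H; have := H (andb_true_intro (conj h1 h2)).
by move=> /Hn; rewrite h1 h2.
Qed.

Lemma mono_pw f (D : set R) (a b : R) :
  a <= b -> finite_set (D `&` `]-oo, b]) ->
  (forall x, a <= x <= b -> {for x, continuous f}) ->
  (forall x, a < x < b -> ~ D x -> derivable f x 1 /\ 0 <= derive1 f x) ->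
  f a <= f b.
Proof.
move=> ab /finite_fsetP [X HX] fc fd.
apply: (@mono_aux f D a b fc fd (size (enum_fset X)) a b (enum_fset X)) => //.
  exact: fset_uniq.
move=> d Dd /andP[h1 h2].
have : (D `&` `]-oo, b]) d by split => //; rewrite /= in_itv /= ltW.
by rewrite HX.
Qed.
Lemma phi_der (t : R) : 1 < t -> is_derive t 1 (fun s => ln (ln s)) ((ln t)^-1 * t^-1).
Proof.
move=> t1.
have t0 : 0 < t by apply: lt_trans t1.
have := @is_derive1_comp R (@ln R) (@ln R) t (ln t)^-1 t^-1 (is_derive1_ln (ln_gt0 t1)) (is_derive1_ln t0).
by [].
Qed.

Lemma h_der (rho : R -> R) (k t : R) : 1 < t -> derivable rho t 1 ->
  is_derive t 1 (fun s => rho s + k * ln (ln s)) (derive1 rho t + k * ((ln t)^-1 * t^-1)).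
Proof.
move=> t1 dr.
have Hr : is_derive t 1 rho (derive1 rho t) by rewrite derive1E; exact: derivableP.
have Hp := @phi_der t t1.
have := is_deriveD Hr (is_deriveZ k Hp).
by [].
Qed.

Lemma phi_cont (t : R) : 1 < t -> {for t, continuous (fun s => ln (ln s))}.
Proof.
move=> t1; apply: continuous_comp; first exact: continuous_ln (lt_trans ltr01 t1).
exact: continuous_ln (ln_gt0 t1).
Qed.
End S.


Section S.
Context {R : realType}.

Lemma h2_der (rho : R -> R) (k t : R) : 1 < t -> derivable rho t 1 ->
  is_derive t 1 (fun s => k * ln (ln s) - rho s) (k * ((ln t)^-1 * t^-1) - derive1 rho t).
Proof.
move=> t1 dr.
have Hr : is_derive t 1 rho (derive1 rho t) by rewrite derive1E; exact: derivableP.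
have Hp := @phi_der R t t1.
have := is_deriveB (is_deriveZ k Hp) Hr.
by [].
Qed.

Lemma bnd (d t k : R) : 1 < t -> `|t * d * ln t| < k ->
  0 <= d + k * ((ln t)^-1 * t^-1) /\ 0 <= k * ((ln t)^-1 * t^-1) - d.
Proof.
move=> t1 H.
have t0 : 0 < t by apply: lt_trans t1.
have l0 : 0 < ln t by apply: ln_gt0.
have p0 : 0 < t * ln t by apply: mulr_gt0.
have e : k * ((ln t)^-1 * t^-1) = k / (t * ln t).
  by rewrite invfM (mulrC t^-1).
rewrite e.
have e1 : `|t * d * ln t| = `|d * (t * ln t)| by congr (`|_|); ring.
move: H; rewrite e1 ltr_norml => /andP[h1 h2].
have e2 : d + k / (t * ln t) = (d * (t * ln t) + k) / (t * ln t).
  by field; rewrite !gt_eqF.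
have e3 : k / (t * ln t) - d = (k - d * (t * ln t)) / (t * ln t).
  by field; rewrite !gt_eqF.
rewrite e2 e3; split; apply: divr_ge0; lra.
Qed.

Lemma lnln_diff (x l : R) : 1 < x -> 1 <= l ->
  ln (ln (l * x)) - ln (ln x) <= ln l / ln x.
Proof.
move=> x1 l1.
have x0 : 0 < x by apply: lt_trans x1.
have l0 : 0 < l by apply: lt_le_trans l1.
have lx0 : 0 < ln x by apply: ln_gt0.
have ll0 : 0 <= ln l by apply: ln_ge0.
have e : ln (l * x) = ln l + ln x by rewrite lnM ?posrE.
have ly0 : 0 < ln (l * x) by rewrite e; lra.
rewrite -ln_div ?posrE //.
have e2 : ln (l * x) / ln x = 1 + ln l / ln x by rewrite e; field; rewrite gt_eqF.
rewrite e2; apply: le_ln1Dx.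
have : 0 <= ln l / ln x by apply: divr_ge0 => //; apply: ltW.
lra.
Qed.

Lemma cont_h1 (rho : R -> R) (k t : R) : 1 < t -> {for t, continuous rho} ->
  {for t, continuous (fun s => rho s + k * ln (ln s))}.
Proof.
move=> t1 rc.
apply: (@continuousD _ _ _ rho (fun s => k * ln (ln s))) => //.
apply: (@continuousM _ _ (fun=> k) (fun s => ln (ln s))); first exact: cst_continuous.
exact: phi_cont.
Qed.

Lemma cont_h2 (rho : R -> R) (k t : R) : 1 < t -> {for t, continuous rho} ->
  {for t, continuous (fun s => k * ln (ln s) - rho s)}.
Proof.
move=> t1 rc.
apply: (@continuousD _ _ _ (fun s => k * ln (ln s)) (fun s => - rho s)).
  apply: (@continuousM _ _ (fun=> k) (fun s => ln (ln s))); first exact: cst_continuous.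
  exact: phi_cont.
exact: (@continuousN _ _ _ rho).
Qed.

Lemma rho_incr (rho : R -> R) c r : proximate_order c rho r -> forall k, 0 < k ->
  exists X, 1 < X /\ c < X /\ forall x l, X <= x -> 1 <= l ->
    `|rho (l * x) - rho x| * ln x <= k * ln l.
Proof.
move=> [c0 rnn [rc [D [DS [Dfin [Dd Dbr]]]]] rlim rder] k k0.
have /nearP [M HM] := rder k k0.
set X := Num.max (Num.max M c) 1 + 1.
have MX : M < X by rewrite /X ltr_pwDr // !le_max lexx.
have cX : c < X by rewrite /X ltr_pwDr // !le_max lexx orbT.
have X1 : 1 < X by rewrite /X ltr_pwDr // !le_max lexx orbT.
exists X; split => //; split => // x l Xx l1.
have x1 : 1 < x by apply: lt_le_trans Xx.
have x0 : 0 < x by apply: lt_trans x1.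
have xy : x <= l * x by apply: ler_peMl => //; apply: ltW.
have tc t : x <= t -> {for t, continuous rho}.
  by move=> xt; apply: rc; rewrite in_itv /= andbT (lt_le_trans cX (le_trans Xx xt)).
have t1 t : x <= t -> 1 < t by move=> xt; apply: lt_le_trans xt.
have tder t : x < t -> ~ D t -> derivable rho t 1 /\ `|t * derive1 rho t * ln t| < k.
  move=> xt nD.
  have ct : c < t by apply: lt_trans xt; apply: lt_le_trans Xx.
  have [dr _] := Dd t ct nD.
  split => //; apply: HM => //.
  by apply: lt_trans xt; apply: lt_le_trans Xx.
have H1 : rho x + k * ln (ln x) <= rho (l * x) + k * ln (ln (l * x)).
  apply: (@mono_pw R (fun s => rho s + k * ln (ln s)) D); [exact: xy|exact: Dfin| |].
    by move=> t /andP[xt _]; apply: cont_h1; [exact: t1|exact: tc].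
  move=> t /andP[xt _] nD; have [dr bd] := tder t xt nD.
  case: (@h_der R rho k t (t1 t (ltW xt)) dr) => Hd Hv; split => //.
  by rewrite derive1E Hv; case: (@bnd (derive1 rho t) t k (t1 t (ltW xt)) bd).
have H2 : k * ln (ln x) - rho x <= k * ln (ln (l * x)) - rho (l * x).
  apply: (@mono_pw R (fun s => k * ln (ln s) - rho s) D); [exact: xy|exact: Dfin| |].
    by move=> t /andP[xt _]; apply: cont_h2; [exact: t1|exact: tc].
  move=> t /andP[xt _] nD; have [dr bd] := tder t xt nD.
  case: (@h2_der rho k t (t1 t (ltW xt)) dr) => Hd Hv; split => //.
  by rewrite derive1E Hv; case: (@bnd (derive1 rho t) t k (t1 t (ltW xt)) bd).
have H3 := @lnln_diff x l x1 l1.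
have lx0 : 0 < ln x by apply: ln_gt0.
have e : ln l / ln x * ln x = ln l by rewrite divfK // gt_eqF.
have H4 : `|rho (l * x) - rho x| <= k * (ln l / ln x).
  rewrite ler_norml; apply/andP; split.
    have : k * (ln (ln (l * x)) - ln (ln x)) <= k * (ln l / ln x) by apply: ler_wpM2l => //; apply: ltW.
    lra.
  have : k * (ln (ln (l * x)) - ln (ln x)) <= k * (ln l / ln x) by apply: ler_wpM2l => //; apply: ltW.
  lra.
have := ler_wpM2r (ltW lx0) H4.
by rewrite -mulrA e.
Qed.

End S.


Section S.
Context {R : realType}.

Lemma sig_bounds (sigma rho : R -> R) (A B t : R) : 0 < A -> 0 < B -> 0 < t ->
  A <= sigma t / t `^ rho t <= B ->
  0 < sigma t /\ ln A + rho t * ln t <= ln (sigma t) <= ln B + rho t * ln t.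
Proof.
move=> A0 B0 t0 /andP[h1 h2].
have p0 : 0 < t `^ rho t by apply: powR_gt0.
have s1 : A * t `^ rho t <= sigma t by rewrite -ler_pdivlMr.
have s2 : sigma t <= B * t `^ rho t by rewrite -ler_pdivrMr.
have s0 : 0 < sigma t by apply: lt_le_trans s1; apply: mulr_gt0.
split => //.
rewrite -(ln_powR t (rho t)) -!lnM ?posrE //.
by rewrite !ler_ln ?posrE ?mulr_gt0 // s1 s2.
Qed.

Arguments sig_bounds {sigma rho A B t}.

Lemma key (sigma rho : R -> R) c r : proximate_order c rho r ->
  admits_proximate_order sigma rho ->
  exists K, 0 <= K /\ forall e, 0 < e -> exists X, 1 < X /\
   forall x l, X <= x -> 1 <= l ->
   [/\ 0 < sigma x, 0 < sigma (l * x),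
    ln (sigma (l * x)) - ln (sigma x) <= K + (r + e) * ln l &
    - K + (r - e) * ln l <= ln (sigma (l * x)) - ln (sigma x)].
Proof.
move=> po [A [B [A0 B0 /nearP [M0 HM0]]]].
have AB : A <= B.
  by have /andP[h1 h2] := HM0 (M0 + 1) (ltr_pwDr ltr01 (lexx _)); apply: le_trans h2.
exists (ln B - ln A); split.
  by rewrite subr_ge0 ler_ln ?posrE.
move=> e e0.
have e20 : 0 < e / 2 by apply: divr_gt0.
have [X1 [X11 [_ HX1]]] := @rho_incr R rho c r po _ e20.
case: po => _ _ _ rlim _.
have /nearP [M1 HM1] : \forall t \near +oo, `|r - rho t| < e / 2 by apply: (cvgr_dist_lt _ _ rlim).

set X := Num.max (Num.max X1 M0) M1 + 1.
have X1X : X1 < X by rewrite /X ltr_pwDr // !le_max lexx.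
have M0X : M0 < X by rewrite /X ltr_pwDr // !le_max lexx orbT.
have M1X : M1 < X by rewrite /X ltr_pwDr // !le_max lexx orbT.
have X1' : 1 < X := lt_trans X11 X1X.
exists X; split => //.
move=> x l Xx l1.
have x1 : 1 < x := lt_le_trans X1' Xx.
have x0 : 0 < x := lt_trans ltr01 x1.
have l0 : 0 < l by apply: lt_le_trans l1.
have xy : x <= l * x by apply: ler_peMl => //; apply: ltW.
have [sx0 /andP[bx1 bx2]] := sig_bounds A0 B0 x0 (HM0 x (lt_le_trans M0X Xx)).
have [sy0 /andP[by1 by2]] := sig_bounds A0 B0 (mulr_gt0 l0 x0)
   (HM0 (l * x) (lt_le_trans M0X (le_trans Xx xy))).
have inc := HX1 x l (ltW (lt_le_trans X1X Xx)) l1.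
have ry := HM1 (l * x) (lt_le_trans M1X (le_trans Xx xy)).
have ely : ln (l * x) = ln l + ln x by rewrite lnM ?posrE.
have ll0 : 0 <= ln l by apply: ln_ge0.
have lx0 : 0 <= ln x by apply: ln_ge0; apply: ltW.
move: ry; rewrite ltr_norml => /andP[ry1 ry2].
have hA : rho (l * x) * ln l <= (r + e / 2) * ln l by apply: ler_wpM2r => //; lra.
have hA' : (r - e / 2) * ln l <= rho (l * x) * ln l by apply: ler_wpM2r => //; lra.
have hB : (rho (l * x) - rho x) * ln x <= `|rho (l * x) - rho x| * ln x.
  by apply: ler_wpM2r => //; apply: ler_norm.
have hB' : - (`|rho (l * x) - rho x| * ln x) <= (rho (l * x) - rho x) * ln x.
  by rewrite -mulNr; apply: ler_wpM2r => //; rewrite lerNl -normrN; apply: ler_norm.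
rewrite ely in by1 by2.
split => //.
  nra.
nra.
Qed.
End S.


Arguments key {R sigma rho c r}.
Section S.
Context {R : realType}.

Lemma ratio_exp (s : R -> R) x l a : 0 < s x -> 0 < s (l * x) -> 0 < l ->
  s (l * x) / (l `^ a * s x) = expR (ln (s (l * x)) - ln (s x) - a * ln l).
Proof.
move=> h1 h2 l0.
rewrite !expRD !expRN !lnK ?posrE // /powR gt_eqF // invfM.
ring.
Qed.

Lemma ratio_bounds (sigma rho : R -> R) c r : proximate_order c rho r ->
  admits_proximate_order sigma rho ->
  exists K, 0 <= K /\ forall e, 0 < e -> exists X, 1 < X /\
   forall x l a, X <= x -> 1 <= l ->
   [/\ 0 < sigma x, 0 < sigma (l * x),
    sigma (l * x) / (l `^ a * sigma x) <= expR (K + (r + e - a) * ln l) &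
    expR (- K + (r - e - a) * ln l) <= sigma (l * x) / (l `^ a * sigma x)].
Proof.
move=> po ad; have [K [K0 HK]] := key po ad.
exists K; split => // e e0; have [X [X1 HX]] := HK e e0.
exists X; split => // x l a Xx l1.
have [s0 s1 h1 h2] := HX x l Xx l1.
have l0 : 0 < l by apply: lt_le_trans l1.
rewrite ratio_exp //; split => //; rewrite ler_expR; lra.
Qed.

Arguments ratio_bounds {sigma rho c r}.

Lemma in_itv1L (l L : R) : 1 <= l -> l <= L -> `[1, L]%classic l.
Proof. by move=> h1 h2; rewrite /= in_itv /= h1 h2. Qed.

Lemma beta_eq (sigma rho : R -> R) c r : proximate_order c rho r ->
  admits_proximate_order sigma rho -> index_beta sigma = r%:E.
Proof.
move=> po ad; have [K [K0 HK]] := ratio_bounds po ad.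
rewrite /index_beta; apply/eqP; rewrite eq_le; apply/andP; split.
  apply: ge_ereal_sup => _ [b [D D0 HD] <-]; rewrite lee_fin leNgt; apply/negP => rb.
  set d := (b - r) / 2.
  have d0 : 0 < d by rewrite /d divr_gt0 // subr_gt0.
  have [X [X1 HX]] := HK d d0.
  set L := expR ((K + `|ln D| + 1) / d).
  have L1 : 1 < L by rewrite /L expR_gt1 divr_gt0 //; apply: ltr_pwDr => //; apply: addr_ge0.
  have lnL : ln L = (K + `|ln D| + 1) / d by rewrite /L expRK.
  have := HD L L1.
  have H : (liminf_pinfty (inf_ratio sigma b L) <= (expR (- `|ln D| - 1))%:E)%E.
    apply: (@liminf_le R _ _ X) => x Xx.
    rewrite /inf_ratio; apply: ge_ereal_inf.
    exists (sigma (L * x) / (L `^ b * sigma x))%:E.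
      by exists L => //; apply: in_itv1L => //; apply: ltW.
    have [_ _ h _] := HX x L b (ltW Xx) (ltW L1).
    rewrite lee_fin; apply: (le_trans h); rewrite ler_expR lnL.
    have -> : r + d - b = - d by rewrite /d; field.
    have -> : - d * ((K + `|ln D| + 1) / d) = - (K + `|ln D| + 1) by field; rewrite gt_eqF.
    lra.
  move=> /le_trans /(_ H); rewrite lee_fin => HD2.
  have : expR (- `|ln D| - 1) < D.
    rewrite -{2}(lnK (x := D)) ?posrE // ltr_expR.
    have := ler_norm (ln D); have := ler_normr (ln D) (ln D) .
    move=> _ h; have : - ln D <= `|ln D| by rewrite -normrN; apply: ler_norm.
    lra.
  by rewrite ltNge HD2.
apply: le_ereal_sup_tmp; exists r%:E => //.
exists r => //; exists (expR (- K) / 2); first by rewrite divr_gt0 ?expR_gt0.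
move=> L L1.
have lL0 : 0 < ln L by apply: ln_gt0.
set e := ln 2 / ln L.
have e0 : 0 < e by rewrite /e divr_gt0 // ln_gt0 // ltr1n.
have [X [X1 HX]] := HK e e0.
apply: (@liminf_ge R _ _ X) => x Xx.
rewrite /inf_ratio; apply: le_ereal_inf_tmp => _ [l /= ll <-].
move: ll; rewrite in_itv /= => /andP[l1 lL].
have [_ _ _ h] := HX x l r (ltW Xx) l1.
rewrite lee_fin; apply: le_trans h.
have -> : expR (- K) / 2 = expR (- K - ln 2).
  by rewrite expRD expRN lnK ?posrE.
rewrite ler_expR.
have l0 : 0 < l by apply: lt_le_trans l1.
have hl : ln l <= ln L by rewrite ler_ln ?posrE // (lt_le_trans l0 lL).
have ee : e * ln L = ln 2 by rewrite /e divfK // gt_eqF.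
have : e * ln l <= e * ln L by apply: ler_wpM2l => //; apply: ltW.
have -> : r - e - r = - e by ring.
lra.
Qed.

Lemma alpha_eq (sigma rho : R -> R) c r : proximate_order c rho r ->
  admits_proximate_order sigma rho -> index_alpha sigma = r%:E.
Proof.
move=> po ad; have [K [K0 HK]] := ratio_bounds po ad.
rewrite /index_alpha; apply/eqP; rewrite eq_le; apply/andP; split; last first.
  apply: le_ereal_inf_tmp => _ [a [C C0 HC] <-]; rewrite lee_fin leNgt; apply/negP => ar.
  set d := (r - a) / 2.
  have d0 : 0 < d by rewrite /d divr_gt0 // subr_gt0.
  have [X [X1 HX]] := HK d d0.
  set L := expR ((K + `|ln C| + 1) / d).
  have L1 : 1 < L by rewrite /L expR_gt1 divr_gt0 //; apply: ltr_pwDr => //; apply: addr_ge0.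
  have lnL : ln L = (K + `|ln C| + 1) / d by rewrite /L expRK.
  have := HC L L1.
  have H : ((expR (`|ln C| + 1))%:E <= limsup_pinfty (sup_ratio sigma a L))%E.
    apply: (@limsup_ge R _ _ X) => x Xx.
    rewrite /sup_ratio; apply: le_ereal_sup_tmp.
    exists (sigma (L * x) / (L `^ a * sigma x))%:E.
      by exists L => //; apply: in_itv1L => //; apply: ltW.
    have [_ _ _ h] := HX x L a (ltW Xx) (ltW L1).
    rewrite lee_fin; apply: (le_trans _ h); rewrite ler_expR lnL.
    have -> : r - d - a = d by rewrite /d; field.
    have -> : d * ((K + `|ln C| + 1) / d) = K + `|ln C| + 1 by field; rewrite gt_eqF.
    lra.
  move=> HC2; have := le_trans H HC2; rewrite lee_fin => HC3.
  have : C < expR (`|ln C| + 1).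
    rewrite -{1}(lnK (x := C)) ?posrE // ltr_expR.
    have := ler_norm (ln C); lra.
  by rewrite ltNge HC3.
apply: ge_ereal_inf; exists r%:E => //.
exists r => //; exists (expR K * 2); first by rewrite mulr_gt0 ?expR_gt0.
move=> L L1.
have lL0 : 0 < ln L by apply: ln_gt0.
set e := ln 2 / ln L.
have e0 : 0 < e by rewrite /e divr_gt0 // ln_gt0 // ltr1n.
have [X [X1 HX]] := HK e e0.
apply: (@limsup_le R _ _ X) => x Xx.
rewrite /sup_ratio; apply: ge_ereal_sup => _ [l /= ll <-].
move: ll; rewrite in_itv /= => /andP[l1 lL].
have [_ _ h _] := HX x l r (ltW Xx) l1.
rewrite lee_fin; apply: le_trans h _.
have -> : expR K * 2 = expR (K + ln 2).
  by rewrite expRD lnK ?posrE.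
rewrite ler_expR.
have l0 : 0 < l by apply: lt_le_trans l1.
have hl : ln l <= ln L by rewrite ler_ln ?posrE // (lt_le_trans l0 lL).
have ee : e * ln L = ln 2 by rewrite /e divfK // gt_eqF.
have : e * ln l <= e * ln L by apply: ler_wpM2l => //; apply: ltW.
have -> : r + e - r = e by ring.
lra.
Qed.

End S.


Arguments ratio_bounds {R sigma rho c r}.
Arguments sig_bounds {R sigma rho A B t}.
Section S.
Context {R : realType}.

Lemma murho_bound (sigma rho : R -> R) c r : proximate_order c rho r ->
  admits_proximate_order sigma rho -> forall e, 0 < e -> exists M, forall t, M < t ->
  r - e <= ln (sigma t) / ln t <= r + e.
Proof.
move=> po [A [B [A0 B0 /nearP [M0 HM0]]]] e e0.
have e20 : 0 < e / 2 by apply: divr_gt0.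
case: po => _ _ _ rlim _.
have /nearP [M1 HM1] : \forall t \near +oo, `|r - rho t| < e / 2 by apply: (cvgr_dist_lt _ _ rlim).
set W := 2 * (`|ln A| + `|ln B|) / e.
exists (Num.max (Num.max M0 M1) (Num.max (expR W) 1)) => t.
rewrite !gt_max => /andP[/andP[tM0 tM1] /andP[tW t1]].
have t0 : 0 < t by apply: lt_trans t1.
have u0 : 0 < ln t by apply: ln_gt0.
have uW : W < ln t by rewrite -(expRK W) ltr_ln ?posrE ?expR_gt0.
have [_ /andP[b1 b2]] := sig_bounds A0 B0 t0 (HM0 t tM0).
have hW : e * W = 2 * (`|ln A| + `|ln B|) by rewrite /W mulrC divfK // gt_eqF.
have heu : e * W <= e * ln t by apply: ler_wpM2l; [apply: ltW|apply: ltW].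
move: (HM1 t tM1); rewrite ltr_norml => /andP[r1 r2].
have p1 : (r - rho t) * ln t <= e / 2 * ln t by apply: ler_wpM2r; [apply: ltW|lra].
have p2 : - (e / 2) * ln t <= (r - rho t) * ln t by apply: ler_wpM2r; [apply: ltW|lra].
have nA1 := ler_norm (ln A); have nA2 : - ln A <= `|ln A| by rewrite -normrN; apply: ler_norm.
have nB1 := ler_norm (ln B); have nB2 : - ln B <= `|ln B| by rewrite -normrN; apply: ler_norm.
rewrite ler_pdivlMr // ler_pdivrMr //.
apply/andP; split; nra.
Qed.

Arguments murho_bound {sigma rho c r}.

Lemma mu_rho_eq (sigma rho : R -> R) c r : proximate_order c rho r ->
  admits_proximate_order sigma rho -> index_mu sigma = r%:E /\ index_rho sigma = r%:E.
Proof.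
move=> po ad; split; apply: ereal_eps => e e0; have [M HM] := murho_bound po ad e e0;
  apply/andP; split.
- by apply: (@liminf_ge R _ _ M) => x /HM /andP[h _]; rewrite lee_fin.
- by apply: (@liminf_le R _ _ M) => x /HM /andP[_ h]; rewrite lee_fin.
- by apply: (@limsup_ge R _ _ M) => x /HM /andP[h _]; rewrite lee_fin.
- by apply: (@limsup_le R _ _ M) => x /HM /andP[_ h]; rewrite lee_fin.
Qed.

Lemma omega1_ok (sigma rho : R -> R) c r : proximate_order c rho r ->
  admits_proximate_order sigma rho -> omega1 sigma.
Proof.
move=> po ad; have [K [K0 HK]] := ratio_bounds po ad.
have [X [X1 HX]] := HK 1 ltr01.
exists (expR (K + (r + 1 - 0) * ln 2)); apply/nearP; exists X => t Xt.
have [s0 s1 h _] := HX t 2 0 (ltW Xt) (ler1n _ _).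
move: h; rewrite powRr0 mul1r ler_pdivrMr // => h.
by rewrite !gtr0_norm.
Qed.

Lemma omega6_ok (sigma rho : R -> R) c r :
  (forall t, 0 <= t -> 0 <= sigma t) ->
  (forall s t, 0 <= s -> s <= t -> sigma s <= sigma t) ->
  proximate_order c rho r ->
  admits_proximate_order sigma rho -> 0 < r -> omega6 sigma.
Proof.
move=> s0 smon po ad r0; have [K [K0 HK]] := ratio_bounds po ad.
have r20 : 0 < r / 2 by apply: divr_gt0.
have [X [X1 HX]] := HK (r / 2) r20.
set l0 := expR ((K + ln 2) * 2 / r).
have ln20 : 0 < ln (2 : R) by apply: ln_gt0; rewrite ltr1n.
have l01 : 1 <= l0.
  rewrite /l0 -[leLHS]expR0 ler_expR; apply: divr_ge0; last exact: ltW.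
  by apply: mulr_ge0 => //; lra.
have key2 t : X <= t -> 2 * sigma t <= sigma (l0 * t).
  move=> Xt; have [st0 sl0 _ h] := HX t l0 0 Xt l01.
  move: h; rewrite powRr0 mul1r ler_pdivlMr //.
  suff -> : expR (- K + (r - r / 2 - 0) * ln l0) = 2 by [].
  rewrite /l0 expRK.
  have -> : - K + (r - r / 2 - 0) * ((K + ln 2) * 2 / r) = ln 2 by field; rewrite gt_eqF.
  by rewrite lnK ?posrE.
set H := Num.max (Num.max 1 l0) (2 * sigma X).
have H1 : 1 <= H by rewrite /H !le_max lexx.
have H0 : 0 <= H by apply: le_trans H1.
exists H => // t t0.
have Ht0 : 0 <= H * t by apply: mulr_ge0.
have sHt := s0 _ Ht0.
case: (leP X t) => Xt.
  apply: le_trans (key2 t Xt) _.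
  have : sigma (l0 * t) <= sigma (H * t).
    apply: smon; first by apply: mulr_ge0 => //; apply: le_trans l01.
    by apply: ler_wpM2r => //; rewrite /H !le_max lexx orbT.
  lra.
have : sigma t <= sigma X by apply: smon => //; apply: ltW.
have : 2 * sigma X <= H by rewrite /H le_max lexx orbT.
lra.
Qed.

End S.
Arguments mu_rho_eq {R sigma rho c r}.
Arguments omega1_ok {R sigma rho c r}.
Arguments omega6_ok {R sigma rho c r}.
Arguments beta_eq {R sigma rho c r}.
Arguments alpha_eq {R sigma rho c r}.

Theorem corollary4p16 (R : realType) (sigma rho : R -> R) (c r : R) :
  (forall t, 0 <= t -> 0 <= sigma t) ->
  (forall s t, 0 <= s -> s <= t -> sigma s <= sigma t) ->
  sigma t @[t --> +oo] --> +oo ->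
  proximate_order c rho r ->
  admits_proximate_order sigma rho ->
  [/\ index_beta sigma = r%:E, index_mu sigma = r%:E,
      index_rho sigma = r%:E, index_alpha sigma = r%:E &
      (0 < r -> omega1 sigma /\ omega6 sigma)].
Proof.
move=> s0 smon _ po ad.
have [hm hr] := mu_rho_eq po ad.
split => //.
- exact: beta_eq po ad.
- exact: alpha_eq po ad.
- move=> r0; split; first exact: omega1_ok po ad.
  exact: omega6_ok s0 smon po ad r0.
Qed.
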